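(* Let $A=(a_1\ a_2\ a_3)$ with positive integers $a_1<a_2<a_3$ be such that the toric ideal $I_A$ is not a complete intersection. Let $M=\{g_1=(-c_1,v_{12},v_{13}),\ g_2=(v_{21},-c_2,v_{23}),\ g_3=(v_{31},v_{32},-c_3)\}$ be a minimal Markov basis for $A$, where all $c_i$ and $v_{ij}$ are positive integers. Then the following are equivalent: (1) $M$ is distance reducing; (2) $M$ reduces the distance of the circuit $z=\gamma(0,a_3,-a_2)$ where $\gamma=1/\gcd(a_2,a_3)$; (3) at least one of $v_{21}<c_2+v_{23}$ or $v_{31}<v_{32}+c_3$ holds.
   Context: For $z\in\mathbb Z^n$, $z^+,z^-\in\mathbb N^n$ denote the unique vectors with disjoint supports and $z=z^+-z^-$; $\|\cdot\|$ is the $1$-norm. The toric ideal is $I_A=\langle x^{u^+}-x^{u^-}:u\in\ker(A)\rangle$; it is a complete intersection if it is generated by $\dim\ker(A)$ elements. A Markov basis is a set $B\subseteq\ker(A)$ whose binomials $x^{u^+}-x^{u^-}$ generate $I_A$; minimal means no proper subset is a Markov basis. For nonzero $z\in\ker(A)$, $u\in\ker(A)$ reduces the distance of $z$ if there exist $(p,q)\in\{(z^+,z^-),(z^-,z^+)\}$ and $\varepsilon\in\{\pm1\}$ with $p+\varepsilon u\in\mathbb N^n$ and $\|p+\varepsilon u-q\|<\|z\|$. $B$ reduces the distance of $Z$ if each nonzero $z\in Z$ has its distance reduced by some element of $B$; $B$ is distance reducing if it reduces the distance of $\ker(A)$. *)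

(* Defs.v *)
From HB Require Import structures.
From mathcomp Require Import all_boot all_order all_algebra.
From mathcomp Require Import mpoly.
Set Implicit Arguments. Unset Strict Implicit. Unset Printing Implicit Defensive.
Import Order.TTheory GRing.Theory Num.Theory.
Local Open Scope ring_scope.

Definition inker (d n : nat) (A : 'M[int]_(d, n)) (u : 'rV[int]_n) : Prop :=
  A *m u^T = 0.

Definition posv (n : nat) (z : 'rV[int]_n) : 'rV[int]_n :=
  \row_i Num.max (z 0 i) 0.
Definition negv (n : nat) (z : 'rV[int]_n) : 'rV[int]_n :=
  \row_i Num.max (- z 0 i) 0.

Definition norm1 (n : nat) (v : 'rV[int]_n) : int := \sum_i `|v 0 i|.

Definition nonneg (n : nat) (v : 'rV[int]_n) : Prop := forall i, 0 <= v 0 i.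

Definition expo (n : nat) (v : 'rV[int]_n) : 'X_{1..n} :=
  [multinom absz (v ord0 i) | i < n].

Definition binom (k : fieldType) (n : nat) (u : 'rV[int]_n) : {mpoly k[n]} :=
  'X_[expo (posv u)] - 'X_[expo (negv u)].

Definition ideal_gen (k : fieldType) (n : nat) (S : {mpoly k[n]} -> Prop)
    (p : {mpoly k[n]}) : Prop :=
  exists r : seq ({mpoly k[n]} * {mpoly k[n]}),
    (forall q, q \in r -> S q.2) /\ p = \sum_(q <- r) q.1 * q.2.

Definition toric_ideal (k : fieldType) (d n : nat) (A : 'M[int]_(d, n))
    (p : {mpoly k[n]}) : Prop :=
  ideal_gen (fun q => exists u, inker A u /\ q = binom k u) p.

Definition dimker (d n : nat) (A : 'M[int]_(d, n)) : nat :=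
  (n - \rank (map_mx (fun x : int => x%:~R : rat) A))%N.

Definition complete_intersection (k : fieldType) (d n : nat)
    (A : 'M[int]_(d, n)) : Prop :=
  exists s : seq {mpoly k[n]}, size s = dimker A /\
    forall p, ideal_gen (fun q => q \in s) p <-> toric_ideal A p.

Definition markov_basis (k : fieldType) (d n : nat) (A : 'M[int]_(d, n))
    (B : 'rV[int]_n -> Prop) : Prop :=
  (forall u, B u -> inker A u) /\
  forall p, ideal_gen (fun q => exists u, B u /\ q = binom k u) p
            <-> toric_ideal A p.

Definition minimal_markov_basis (k : fieldType) (d n : nat)
    (A : 'M[int]_(d, n)) (B : 'rV[int]_n -> Prop) : Prop :=
  markov_basis k A B /\
  forall B' : 'rV[int]_n -> Prop,
    (forall u, B' u -> B u) -> markov_basis k A B' -> forall u, B u -> B' u.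

Definition reduces (n : nat) (u z : 'rV[int]_n) : Prop :=
  exists p q : 'rV[int]_n,
    ((p, q) = (posv z, negv z) \/ (p, q) = (negv z, posv z)) /\
    exists eps : int, (eps = 1 \/ eps = -1) /\
      nonneg (p + eps *: u) /\ norm1 (p + eps *: u - q) < norm1 z.

Definition reduces_set (n : nat) (B Z : 'rV[int]_n -> Prop) : Prop :=
  forall z, Z z -> z != 0 -> exists u, B u /\ reduces u z.

Definition distance_reducing (d n : nat) (A : 'M[int]_(d, n))
    (B : 'rV[int]_n -> Prop) : Prop :=
  reduces_set B (inker A).

Definition vec3 (x y z : int) : 'rV[int]_3 := \row_(i < 3) [:: x; y; z]`_i.

(* Main.v *)
Require Import Defs.
From HB Require Import structures.
From mathcomp Require Import all_boot all_order all_algebra.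
From mathcomp Require Import mpoly.
From mathcomp Require Import zify.
Import Order.TTheory GRing.Theory Num.Theory.
Local Open Scope ring_scope.

Lemma vec3E0 (x y z : int) : vec3 x y z 0 0 = x. Proof. by rewrite mxE. Qed.
Lemma vec3E1 (x y z : int) : vec3 x y z 0 1 = y. Proof. by rewrite mxE. Qed.
Lemma vec3E2 (x y z : int) : vec3 x y z 0 2%:R = z. Proof. by rewrite mxE. Qed.

Lemma ord3_cases (i : 'I_3) : i = 0 \/ i = 1 \/ i = 2%:R.
Proof.
case: i => [[|[|[|n]]] Hi]; [left|right;left|right;right|by []]; by apply: val_inj.
Qed.

Lemma vec3_eta (u : 'rV[int]_3) : u = vec3 (u 0 0) (u 0 1) (u 0 2%:R).
Proof.
apply/rowP => i; rewrite mxE.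
by case: (ord3_cases i) => [->|[->|->]].
Qed.

Lemma vec3_add (x y z x' y' z' : int) :
  vec3 x y z + vec3 x' y' z' = vec3 (x + x') (y + y') (z + z').
Proof. apply/rowP => i; rewrite !mxE. by case: (ord3_cases i) => [->|[->|->]]. Qed.

Lemma vec3_scale (e x y z : int) : e *: vec3 x y z = vec3 (e * x) (e * y) (e * z).
Proof. apply/rowP => i; rewrite !mxE. by case: (ord3_cases i) => [->|[->|->]]. Qed.

Lemma vec3_opp (x y z : int) : - vec3 x y z = vec3 (- x) (- y) (- z).
Proof. apply/rowP => i; rewrite !mxE. by case: (ord3_cases i) => [->|[->|->]]. Qed.

Lemma posv3 (x y z : int) : posv (vec3 x y z) = vec3 (Num.max x 0) (Num.max y 0) (Num.max z 0).
Proof. apply/rowP => i; rewrite !mxE. by case: (ord3_cases i) => [->|[->|->]]. Qed.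

Lemma negv3 (x y z : int) : negv (vec3 x y z) = vec3 (Num.max (-x) 0) (Num.max (-y) 0) (Num.max (-z) 0).
Proof. apply/rowP => i; rewrite !mxE. by case: (ord3_cases i) => [->|[->|->]]. Qed.

Lemma norm1_3 (x y z : int) : norm1 (vec3 x y z) = `|x| + `|y| + `|z|.
Proof. by rewrite /norm1 !big_ord_recr big_ord0 /= !mxE add0r. Qed.

Lemma nonneg3 (x y z : int) : nonneg (vec3 x y z) <-> (0 <= x /\ 0 <= y /\ 0 <= z).
Proof.
split.
  by move=> H; move: (H 0) (H 1) (H 2%:R); rewrite !mxE.
move=> [h1 [h2 h3]] i; rewrite mxE; by case: (ord3_cases i) => [->|[->|->]].
Qed.

Lemma inker3 (a1 a2 a3 x y z : int) :
  inker (vec3 a1 a2 a3) (vec3 x y z) <-> a1 * x + a2 * y + a3 * z = 0.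
Proof.
rewrite /inker; split.
  move=> H; have := congr1 (fun M : 'M[int]_1 => M 0 0) H.
  by rewrite !mxE !big_ord_recr big_ord0 /= !mxE add0r.
move=> H; apply/matrixP => i j; rewrite (ord1 i) (ord1 j) !mxE.
by rewrite !big_ord_recr big_ord0 /= !mxE add0r.
Qed.

Lemma vec3_eq0 (x y z : int) : vec3 x y z = 0 <-> (x = 0 /\ y = 0 /\ z = 0).
Proof.
split.
  by move=> H; move: (congr1 (fun M : 'rV[int]_3 => M 0 0) H) (congr1 (fun M : 'rV[int]_3 => M 0 1) H) (congr1 (fun M : 'rV[int]_3 => M 0 2%:R) H); rewrite !mxE.
move=> [-> [-> ->]]; apply/rowP => i; rewrite !mxE; by case: (ord3_cases i) => [->|[->|->]].
Qed.

Lemma test (x : int) : Num.max x 0 - Num.max (-x) 0 = x /\ `|x| >= 0.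
Proof. lia. Qed.

Definition Red (g1 g2 g3 w1 w2 w3 : int) : Prop :=
  exists eps : int, (eps = 1 \/ eps = -1) /\
  ((0 <= Num.max w1 0 + eps * g1 /\ 0 <= Num.max w2 0 + eps * g2 /\
    0 <= Num.max w3 0 + eps * g3 /\
    `|w1 + eps * g1| + `|w2 + eps * g2| + `|w3 + eps * g3| < `|w1| + `|w2| + `|w3|) \/
   (0 <= Num.max (- w1) 0 + eps * g1 /\ 0 <= Num.max (- w2) 0 + eps * g2 /\
    0 <= Num.max (- w3) 0 + eps * g3 /\
    `|- w1 + eps * g1| + `|- w2 + eps * g2| + `|- w3 + eps * g3| < `|w1| + `|w2| + `|w3|)).

Lemma RedE g1 g2 g3 w1 w2 w3 :
  reduces (vec3 g1 g2 g3) (vec3 w1 w2 w3) <-> Red g1 g2 g3 w1 w2 w3.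
Proof.
rewrite /reduces /Red posv3 negv3 norm1_3; split.
  move=> [p [q [Hpq [eps [He [Hn Hl]]]]]]; exists eps; split => //.
  case: Hpq => [[Hp Hq]|[Hp Hq]]; subst p q.
    left. move: Hn Hl.
    rewrite vec3_scale vec3_add nonneg3 vec3_opp vec3_add norm1_3 => -[h1 [h2 h3]] hl.
    split; first exact h1. split; first exact h2. split; first exact h3. lia.
  right. move: Hn Hl.
  rewrite vec3_scale vec3_add nonneg3 vec3_opp vec3_add norm1_3 => -[h1 [h2 h3]] hl.
  split; first exact h1. split; first exact h2. split; first exact h3. lia.
move=> [eps [He [[h1 [h2 [h3 hl]]]|[h1 [h2 [h3 hl]]]]]].
  exists (vec3 (Num.max w1 0) (Num.max w2 0) (Num.max w3 0)),
         (vec3 (Num.max (- w1) 0) (Num.max (- w2) 0) (Num.max (- w3) 0)).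
  split; first by left.
  exists eps; split => //.
  rewrite vec3_scale vec3_add nonneg3 vec3_opp vec3_add norm1_3; split; first by [].
  lia.
exists (vec3 (Num.max (- w1) 0) (Num.max (- w2) 0) (Num.max (- w3) 0)),
       (vec3 (Num.max w1 0) (Num.max w2 0) (Num.max w3 0)).
split; first by right.
exists eps; split => //.
rewrite vec3_scale vec3_add nonneg3 vec3_opp vec3_add norm1_3; split; first by [].
lia.
Qed.

Lemma Red_opp g1 g2 g3 w1 w2 w3 : Red g1 g2 g3 (- w1) (- w2) (- w3) -> Red g1 g2 g3 w1 w2 w3.
Proof.
move=> [eps [He H]]; exists eps; split => //.
rewrite !opprK !normrN in H; case: H => H; [right|left]; exact H.
Qed.

Section Core.
Variables (a1 a2 a3 c1 c2 c3 v12 v13 v21 v23 v31 v32 : int).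
Hypotheses (ha1 : 0 < a1) (h12 : a1 < a2) (h23 : a2 < a3)
 (hc1 : 0 < c1) (hc2 : 0 < c2) (hc3 : 0 < c3) (hv12 : 0 < v12) (hv13 : 0 < v13)
 (hv21 : 0 < v21) (hv23 : 0 < v23) (hv31 : 0 < v31) (hv32 : 0 < v32)
 (E1 : a1 * (- c1) + a2 * v12 + a3 * v13 = 0)
 (E2 : a1 * v21 + a2 * (- c2) + a3 * v23 = 0)
 (E3 : a1 * v31 + a2 * v32 + a3 * (- c3) = 0)
 (M1 : forall X Y Z : int, 0 <= Y -> 0 <= Z -> 0 < Y + Z -> a1 * X = a2 * Y + a3 * Z -> c1 <= X)
 (M2 : forall X Y Z : int, 0 <= Y -> 0 <= Z -> 0 < Y + Z -> a2 * X = a1 * Y + a3 * Z -> c2 <= X)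
 (M3 : forall X Y Z : int, 0 <= Y -> 0 <= Z -> 0 < Y + Z -> a3 * X = a1 * Y + a2 * Z -> c3 <= X).

Lemma f_c1 : v12 + v13 < c1. Proof. nia. Qed.
Lemma f_c2 : v23 < c2. Proof. nia. Qed.
Lemma f_v32 : v32 < c2.
Proof.
rewrite ltNge; apply/negP => h.
have := M3 (c3 - v23) (v31 + v21) (v32 - c2).
lia.
Qed.
Lemma f_v23 : v23 < c3.
Proof.
rewrite ltNge; apply/negP => h.
have := M2 (c2 - v32) (v21 + v31) (v23 - c3).
lia.
Qed.

Lemma case1 w1 w2 w3 : a1 * w1 + a2 * w2 + a3 * w3 = 0 -> 0 < w1 -> w2 <= 0 -> w3 <= 0 ->
  Red (-c1) v12 v13 w1 w2 w3.
Proof.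
move=> hk p1 p2 p3.
have hyz : 0 < - w2 - w3 by nia.
have hX := M1 (w1) (- w2) (- w3).
have := f_c1.
exists 1; split; first by left.
left; lia.
Qed.

Lemma case2 w1 w2 w3 : a1 * w1 + a2 * w2 + a3 * w3 = 0 -> w1 <= 0 -> 0 < w2 -> w3 <= 0 ->
  (v21 < c2 + v23 \/ v31 < v32 + c3) ->
  Red v21 (-c2) v23 w1 w2 w3 \/ Red v31 v32 (-c3) w1 w2 w3.
Proof.
move=> hk p1 p2 p3 cond.
have hyz : 0 < - w1 - w3 by nia.
have hX : c2 <= w2 by apply: (M2 _ (- w1) (- w3)); lia.
have fc2 := f_c2; have fv32 := f_v32.
case: (lerP v21 (- w1)) => hY; case: (lerP v23 (- w3)) => hZ.
- left; exists (-1); split; first by right.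
  right; lia.
- left; exists 1; split; first by left.
  left; lia.
-
  have hZ' : v23 < - w3.
    rewrite lt_neqAle hZ andbT; apply/negP => /eqP e.
    have : 0 < a1 * (v21 + w1) by nia. nia.
  have hZc : c3 <= - w3 - v23.
    apply: (M3 _ (v21 + w1) (w2 - c2)); lia.
  case: cond => cond.
    left; exists 1; split; first by left.
    left; lia.
  right; exists 1; split; first by left.
  right; lia.
- exfalso. have : 0 < a1 * (v21 + w1) by nia. nia.
Qed.

Lemma case3 w1 w2 w3 : a1 * w1 + a2 * w2 + a3 * w3 = 0 -> w1 <= 0 -> w2 <= 0 -> 0 < w3 ->
  (v21 < c2 + v23 \/ v31 < v32 + c3) ->
  Red (-c1) v12 v13 w1 w2 w3 \/ Red v21 (-c2) v23 w1 w2 w3 \/ Red v31 v32 (-c3) w1 w2 w3.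
Proof.
move=> hk p1 p2 p3 cond.
have hyz : 0 < - w1 - w2 by nia.
have hX : c3 <= w3 by apply: (M3 _ (- w1) (- w2)); lia.
have fc1 := f_c1; have fv23 := f_v23.
case: (lerP v31 (- w1)) => hY; case: (lerP v32 (- w2)) => hZ.
- right; right; exists (-1); split; first by right.
  right; lia.
-
  have hY' : v31 < - w1.
    rewrite lt_neqAle hY andbT; apply/negP => /eqP e.
    have : 0 < a2 * (v32 + w2) by nia. nia.
  have hYc : c1 <= - w1 - v31.
    apply: (M1 _ (v32 + w2) (w3 - c3)); lia.
  left; exists 1; split; first by left.
  right; lia.
-
  have hZ' : v32 < - w2.
    rewrite lt_neqAle hZ andbT; apply/negP => /eqP e.
    have : 0 < a1 * (v31 + w1) by nia. nia.
  have hZc : c2 <= - w2 - v32.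
    apply: (M2 _ (v31 + w1) (w3 - c3)); lia.
  case: (ltP v31 (v32 + c3)) => c'.
    right; right; exists 1; split; first by left.
    left; lia.
  have cond' : v21 < c2 + v23 by case: cond; lia.
  right; left; exists 1; split; first by left.
  right; lia.
- exfalso. have : 0 < a1 * (v31 + w1) by nia. nia.
Qed.

Lemma core_pos w1 w2 w3 : a1 * w1 + a2 * w2 + a3 * w3 = 0 ->
  (v21 < c2 + v23 \/ v31 < v32 + c3) ->
  (0 < w1 /\ w2 <= 0 /\ w3 <= 0) \/ (w1 <= 0 /\ 0 < w2 /\ w3 <= 0) \/ (w1 <= 0 /\ w2 <= 0 /\ 0 < w3) ->
  Red (-c1) v12 v13 w1 w2 w3 \/ Red v21 (-c2) v23 w1 w2 w3 \/ Red v31 v32 (-c3) w1 w2 w3.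
Proof.
move=> hk cond [[p1 [p2 p3]]|[[p1 [p2 p3]]|[p1 [p2 p3]]]].
- by left; apply: case1.
- by right; apply: case2.
- by apply: case3.
Qed.

Lemma core w1 w2 w3 : a1 * w1 + a2 * w2 + a3 * w3 = 0 -> ~ (w1 = 0 /\ w2 = 0 /\ w3 = 0) ->
  (v21 < c2 + v23 \/ v31 < v32 + c3) ->
  Red (-c1) v12 v13 w1 w2 w3 \/ Red v21 (-c2) v23 w1 w2 w3 \/ Red v31 v32 (-c3) w1 w2 w3.
Proof using All.
move=> hk hnz cond.
have nn : ~ (0 <= w1 /\ 0 <= w2 /\ 0 <= w3).
  move=> [q1 [q2 q3]]; apply: hnz; nia.
have np : ~ (w1 <= 0 /\ w2 <= 0 /\ w3 <= 0).
  move=> [q1 [q2 q3]]; apply: hnz; nia.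
have [h|h] : ((0 < w1 /\ w2 <= 0 /\ w3 <= 0) \/ (w1 <= 0 /\ 0 < w2 /\ w3 <= 0) \/ (w1 <= 0 /\ w2 <= 0 /\ 0 < w3)) \/
  ((0 < - w1 /\ - w2 <= 0 /\ - w3 <= 0) \/ (- w1 <= 0 /\ 0 < - w2 /\ - w3 <= 0) \/ (- w1 <= 0 /\ - w2 <= 0 /\ 0 < - w3)) by lia.
  exact: core_pos.
have hk' : a1 * (- w1) + a2 * (- w2) + a3 * (- w3) = 0 by lia.
case: (@core_pos (- w1) (- w2) (- w3) hk' cond h) => [r|[r|r]]; [left|right;left|right;right]; exact: Red_opp.
Qed.

End Core.

Lemma z_not (a b c1 c2 c3 v12 v13 v21 v23 v31 v32 : int) : 0 <= a -> 0 <= b ->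
  0 < c1 -> 0 < c2 -> 0 < c3 -> 0 < v12 -> 0 < v13 -> 0 < v21 -> 0 < v23 -> 0 < v31 -> 0 < v32 ->
  c2 + v23 <= v21 -> v32 + c3 <= v31 ->
  ~ Red (-c1) v12 v13 0 b (-a) /\ ~ Red v21 (-c2) v23 0 b (-a) /\ ~ Red v31 v32 (-c3) 0 b (-a).
Proof.
move=> *; split; [|split]; move=> [eps [[->|->] [H|H]]]; lia.
Qed.


Lemma mcoeffMX0 (k : fieldType) (n : nat) (p : {mpoly k[n]}) (m m0 : 'X_{1..n}) :
  ~~ (m <= m0)%MM -> (p * 'X_[m])@_m0 = 0.
Proof.
move=> nle; rewrite mcoeffM big1 // => -[k1 k2] /= /eqP e.
rewrite mcoeffX; case: eqP => [em|_]; last by rewrite mulr0.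
exfalso; move/negP: nle; apply; apply/mnm_lepP => i.
by rewrite e em mnmDE leq_addl.
Qed.

Lemma coef_zero (k : fieldType) (M : 'rV[int]_3 -> Prop) (p : {mpoly k[3]}) (m0 : 'X_{1..3}) :
  ideal_gen (fun q => exists u, M u /\ q = binom k u) p ->
  (forall u, M u -> ~~ (expo (posv u) <= m0)%MM /\ ~~ (expo (negv u) <= m0)%MM) ->
  p@_m0 = 0.
Proof.
move=> [r [Hr ->]] HM.
rewrite raddf_sum big1_seq // => q Hq.
have [u [Mu ->]] := Hr q Hq.
have [h1 h2] := HM u Mu.
by rewrite /binom mulrBr raddfB /= !mcoeffMX0 // subr0.
Qed.

Lemma markov_min (k : fieldType) (A : 'M[int]_(1, 3)) (M : 'rV[int]_3 -> Prop) (u : 'rV[int]_3) :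
  markov_basis k A M -> inker A u -> ~~ (expo (negv u) <= expo (posv u))%MM ->
  (forall g, M g -> ~~ (expo (posv g) <= expo (posv u))%MM /\ ~~ (expo (negv g) <= expo (posv u))%MM) ->
  False.
Proof.
move=> [_ mb] ku nle HM.
have T : toric_ideal A (binom k u).
  exists [:: (1, binom k u)]; split.
    by move=> q; rewrite mem_seq1 => /eqP -> /=; exists u.
  by rewrite big_cons big_nil addr0 mul1r.
have := @coef_zero k M (binom k u) (expo (posv u)) ((mb _).2 T) HM.
rewrite /binom mcoeffB !mcoeffX eqxx.
have -> : (expo (negv u) == expo (posv u)) = false.
  apply/negP => /eqP e; move/negP: nle; apply; rewrite e.
  by apply/mnm_lepP => i.
by rewrite subr0 => /eqP; rewrite oner_eq0.
Qed.

Lemma expo3_le (x y z x' y' z' : int) :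
  (expo (vec3 x y z) <= expo (vec3 x' y' z'))%MM =
  [&& (absz x <= absz x')%N, (absz y <= absz y')%N & (absz z <= absz z')%N].
Proof.
apply/mnm_lepP/and3P.
  by move=> H; move: (H 0) (H 1) (H 2%:R); rewrite !mnmE !mxE.
move=> [h1 h2 h3] i; rewrite !mnmE !mxE.
by case: (ord3_cases i) => [->|[->|->]].
Qed.

Theorem theorem3p6 (k : fieldType) (a1 a2 a3 : nat)
    (c1 c2 c3 v12 v13 v21 v23 v31 v32 : nat) :
  (0 < a1)%N -> (a1 < a2)%N -> (a2 < a3)%N ->
  ~ complete_intersection k (vec3 a1%:Z a2%:Z a3%:Z) ->
  (0 < c1)%N -> (0 < c2)%N -> (0 < c3)%N ->
  (0 < v12)%N -> (0 < v13)%N -> (0 < v21)%N ->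
  (0 < v23)%N -> (0 < v31)%N -> (0 < v32)%N ->
  let g1 := vec3 (- c1%:Z) v12%:Z v13%:Z in
  let g2 := vec3 v21%:Z (- c2%:Z) v23%:Z in
  let g3 := vec3 v31%:Z v32%:Z (- c3%:Z) in
  let M := fun g : 'rV[int]_3 => g = g1 \/ g = g2 \/ g = g3 in
  minimal_markov_basis k (vec3 a1%:Z a2%:Z a3%:Z) M ->
  let gam := gcdn a2 a3 in
  let z := vec3 0 (a3 %/ gam)%N%:Z (- (a2 %/ gam)%N%:Z) in
  (distance_reducing (vec3 a1%:Z a2%:Z a3%:Z) M <-> reduces_set M (fun w => w = z)) /\
  (reduces_set M (fun w => w = z) <-> ((v21 < c2 + v23)%N \/ (v31 < v32 + c3)%N)).
Proof.
move=> ha1 h12 h23 _ hc1 hc2 hc3 hv12 hv13 hv21 hv23 hv31 hv32 g1 g2 g3 M mm gam z.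
have mb := mm.1.
have K1 := mb.1 g1 (or_introl erefl).
have K2 := mb.1 g2 (or_intror (or_introl erefl)).
have K3 := mb.1 g3 (or_intror (or_intror erefl)).
rewrite /g1 inker3 in K1; rewrite /g2 inker3 in K2; rewrite /g3 inker3 in K3.
have Min1 : forall X Y Z : int, 0 <= Y -> 0 <= Z -> 0 < Y + Z ->
    a1%:Z * X = a2%:Z * Y + a3%:Z * Z -> c1%:Z <= X.
  move=> X Y Z hY hZ hYZ e; rewrite leNgt; apply/negP => hlt.
  have hX : 0 < X by nia.
  apply: (@markov_min k _ M (vec3 X (-Y) (-Z)) mb).
  - rewrite inker3; lia.
  - rewrite negv3 posv3 expo3_le; apply/negP => /and3P [q1 q2 q3]; lia.
  - move=> g [->|[->|->]]; rewrite /g1 /g2 /g3 negv3 !posv3 !expo3_le;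
      split; apply/negP => /and3P [q1 q2 q3]; lia.
have Min2 : forall X Y Z : int, 0 <= Y -> 0 <= Z -> 0 < Y + Z ->
    a2%:Z * X = a1%:Z * Y + a3%:Z * Z -> c2%:Z <= X.
  move=> X Y Z hY hZ hYZ e; rewrite leNgt; apply/negP => hlt.
  have hX : 0 < X by nia.
  apply: (@markov_min k _ M (vec3 (-Y) X (-Z)) mb).
  - rewrite inker3; lia.
  - rewrite negv3 posv3 expo3_le; apply/negP => /and3P [q1 q2 q3]; lia.
  - move=> g [->|[->|->]]; rewrite /g1 /g2 /g3 negv3 !posv3 !expo3_le;
      split; apply/negP => /and3P [q1 q2 q3]; lia.
have Min3 : forall X Y Z : int, 0 <= Y -> 0 <= Z -> 0 < Y + Z ->
    a3%:Z * X = a1%:Z * Y + a2%:Z * Z -> c3%:Z <= X.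
  move=> X Y Z hY hZ hYZ e; rewrite leNgt; apply/negP => hlt.
  have hX : 0 < X by nia.
  apply: (@markov_min k _ M (vec3 (-Y) (-Z) X) mb).
  - rewrite inker3; lia.
  - rewrite negv3 posv3 expo3_le; apply/negP => /and3P [q1 q2 q3]; lia.
  - move=> g [->|[->|->]]; rewrite /g1 /g2 /g3 negv3 !posv3 !expo3_le;
      split; apply/negP => /and3P [q1 q2 q3]; lia.
have Core := @core a1%:Z a2%:Z a3%:Z c1%:Z c2%:Z c3%:Z v12%:Z v13%:Z v21%:Z v23%:Z v31%:Z v32%:Z
  ltac:(lia) ltac:(lia) ltac:(lia) ltac:(lia) ltac:(lia) ltac:(lia) ltac:(lia) ltac:(lia)
  ltac:(lia) ltac:(lia) ltac:(lia) ltac:(lia) K1 K2 K3 Min1 Min2 Min3.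
have to1 : ((v21 < c2 + v23)%N \/ (v31 < v32 + c3)%N) -> distance_reducing (vec3 a1%:Z a2%:Z a3%:Z) M.
  move=> cond w kw nz.
  rewrite (vec3_eta w) inker3 in kw.
  have nz' : ~ (w 0 0 = 0 /\ w 0 1 = 0 /\ w 0 2%:R = 0).
    by rewrite -vec3_eq0 -vec3_eta; apply/eqP.
  have cond' : (v21%:Z < c2%:Z + v23%:Z \/ v31%:Z < v32%:Z + c3%:Z) by lia.
  rewrite (vec3_eta w).
  case: (Core _ _ _ kw nz' cond') => [r|[r|r]].
  - by exists g1; split; [left|rewrite /g1 RedE].
  - by exists g2; split; [right;left|rewrite /g2 RedE].
  - by exists g3; split; [right;right|rewrite /g3 RedE].
have gam0 : (0 < gam)%N by rewrite gcdn_gt0 (ltn_trans ha1 h12).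
have hb : (0 < a3 %/ gam)%N.
  by rewrite divn_gt0 // dvdn_leq ?dvdn_gcdr // (ltn_trans ha1 (ltn_trans h12 h23)).
have hzk : inker (vec3 a1%:Z a2%:Z a3%:Z) z.
  rewrite /z inker3.
  have e : (a2 * (a3 %/ gam) = a3 * (a2 %/ gam))%N.
    by rewrite !muln_divA ?dvdn_gcdr ?dvdn_gcdl // mulnC.
  move: e; generalize (a3 %/ gam)%N (a2 %/ gam)%N => b a e; lia.
have znz : z != 0.
  apply/eqP; rewrite /z vec3_eq0 => -[_ [hb' _]]; lia.
have to3 : reduces_set M (fun w => w = z) -> ((v21 < c2 + v23)%N \/ (v31 < v32 + c3)%N).
  move=> R2.
  case: (ltnP v21 (c2 + v23)) => q1; first by left.
  case: (ltnP v31 (v32 + c3)) => q2; first by right.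
  exfalso.
  have [g [Mg red]] := R2 z erefl znz.
  have [n1 [n2 n3]] : ~ Red (- c1%:Z) v12%:Z v13%:Z 0 (a3 %/ gam)%N%:Z (- (a2 %/ gam)%N%:Z) /\
      ~ Red v21%:Z (- c2%:Z) v23%:Z 0 (a3 %/ gam)%N%:Z (- (a2 %/ gam)%N%:Z) /\
      ~ Red v31%:Z v32%:Z (- c3%:Z) 0 (a3 %/ gam)%N%:Z (- (a2 %/ gam)%N%:Z).
    apply: z_not => //; try lia.
  move: red; rewrite /z.
  by case: Mg => [->|[->|->]]; rewrite /g1 /g2 /g3 RedE.
split; split.
- by move=> DR w -> nz; apply: DR.
- by move=> R2; apply: to1; apply: to3.
- exact: to3.
- by move=> cond w -> nz; apply: (to1 cond).
Qed.
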